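(* Let $T=\omega^{<\omega}$ be the tree of all finite sequences of natural numbers ordered by end-extension $\sqsubseteq$. There is a colouring $c:T\to\omega$ such that for every strong subtree $T'$ of $T$ of infinite height, $c[T']=\omega$.
   Context: For a tree $T$, the level of $t$ is the number of its strict predecessors; the tree is balanced if it has infinite height and no maximal nodes, or all maximal nodes lie at the top level. A subtree is a subset with the induced order in which meets agree with those of $T$. A strong subtree $S$ of $T$ is either empty or a rooted balanced subtree such that every level of $S$ is contained in a single level of $T$ and, for every non-maximal $s\in S$ and every immediate successor $t$ of $s$ in $T$, exactly one immediate successor of $s$ in $S$ lies above (or equals) $t$. *)

(* Defs.v *)
From mathcomp Require Import all_boot.
From mathcomp Require Import boolp classical_sets.
Set Implicit Arguments. Unset Strict Implicit. Unset Printing Implicit Defensive.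

Definition le_T (s t : seq nat) : Prop := prefix s t.
Definition lt_T (s t : seq nat) : Prop := prefix s t /\ s <> t.

Fixpoint meetT (s t : seq nat) : seq nat :=
  match s, t with
  | x :: s', y :: t' => if x == y then x :: meetT s' t' else [::]
  | _, _ => [::]
  end.


(* Level of s in S = number of strict predecessors of s lying in S
   (strict predecessors of s in T are exactly take i s, i < size s). *)
Definition levelS (S : set (seq nat)) (s : seq nat) : nat :=
  count (fun i => `[< S (take i s) >]) (iota 0 (size s)).

Definition levelT (s : seq nat) : nat := size s.

Definition maximalS (S : set (seq nat)) (s : seq nat) : Prop :=
  S s /\ ~ (exists u, S u /\ lt_T s u).

Definition infinite_height (S : set (seq nat)) : Prop :=
  forall n, exists s, S s /\ n <= levelS S s.

Definition balanced (S : set (seq nat)) : Prop :=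
  (infinite_height S /\ forall s, ~ maximalS S s)
  \/ (exists n, (exists s, S s /\ levelS S s = n)
                /\ (forall s, S s -> levelS S s <= n)
                /\ (forall s, maximalS S s -> levelS S s = n)).

(* Subtree: meets computed in S agree with those of T, i.e. for s, t in S the
   T-meet belongs to S and is the greatest lower bound of s, t in S. *)
Definition subtree (S : set (seq nat)) : Prop :=
  forall s t, S s -> S t ->
    [/\ S (meetT s t), le_T (meetT s t) s, le_T (meetT s t) t
      & forall u, S u -> le_T u s -> le_T u t -> le_T u (meetT s t)].

Definition rooted (S : set (seq nat)) : Prop :=
  exists r, S r /\ forall s, S s -> le_T r s.

Definition imm_succS (S : set (seq nat)) (s u : seq nat) : Prop :=
  S u /\ lt_T s u /\ ~ (exists v, S v /\ lt_T s v /\ lt_T v u).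

(* Strong subtree. Immediate successors of s in T are rcons s n. *)
Definition strong_subtree (S : set (seq nat)) : Prop :=
  S = set0 \/
  [/\ rooted S, balanced S, subtree S,
      (forall s t, S s -> S t -> levelS S s = levelS S t -> levelT s = levelT t)
    & (forall s, S s -> ~ maximalS S s ->
         forall n : nat, exists! u, imm_succS S s u /\ le_T (rcons s n) u)].

(* Main.v *)
Require Import Defs.
From mathcomp Require Import all_boot.
From mathcomp Require Import boolp classical_sets.
From mathcomp Require Import zify.

Set Implicit Arguments. Unset Strict Implicit. Unset Printing Implicit Defensive.

Definition dec (x : nat) : nat * nat := odflt (0,0) (unpickle x).
Definition colour (t : seq nat) : nat :=
  (dec (nth 0 t (find (fun x => (dec x).1 == size t) t))).2.

Lemma dec_pickle a b : dec (pickle (a, b)) = (a, b).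
Proof. by rewrite /dec pickleK. Qed.

Lemma level_succ (S : set (seq nat)) s u :
  S s -> lt_T s u -> ~ (exists v, S v /\ lt_T s v /\ lt_T v u) ->
  levelS S u = (levelS S s).+1.
Proof.
move=> Ss [/prefixP [w ew] neq] nobetween; subst u.
case: w neq nobetween => [|w0 w'] neq nobetween; first by rewrite cats0 in neq.
rewrite /levelS size_cat iotaD count_cat /=.
rewrite add0n.
have E1 : count (fun i : nat => `[< S (take i (s ++ w0 :: w')) >]) (iota 0 (size s))
   = count (fun i : nat => `[< S (take i s) >]) (iota 0 (size s)).
  apply: eq_in_count => i; rewrite mem_iota add0n => /andP [_ lti].
  by rewrite take_cat lti.
rewrite E1 take_cat ltnn subnn take0 cats0.
have -> : `[< S s >] = true by apply/asboolP.
suff -> : count (fun i : nat => `[< S (take i (s ++ w0 :: w')) >])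
     (iota (size s).+1 (size w')) = 0 by rewrite addn0 addn1.
apply/eqP; rewrite -leqn0 leqNgt -has_count; apply/negP => /hasP [i].
rewrite mem_iota => /andP [lo hi] /asboolP Si.
apply: nobetween; exists (take i (s ++ w0 :: w')); split => //.
have ltis : ~~ (i < size s) by rewrite -leqNgt ltnW.
split.
  split; first by rewrite take_cat (negbTE ltis) prefix_prefix.
  move=> /(f_equal size); rewrite size_take size_cat /=.
  have h : i < size s + (size w').+1 by lia.
  rewrite h => e'; by rewrite e' ltnn in lo.
split; first exact: prefix_take.
move=> e; move: (f_equal size e); rewrite size_take size_cat /=.
have h : i < size s + (size w').+1 by lia.
rewrite h => e'; by rewrite e' ltnn in h.
Qed.

Lemma lt_size (v w : seq nat) : lt_T v w -> size v < size w.
Proof.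
case=> /prefixP [x ->] neq; rewrite size_cat.
case: x neq => [|a x] neq; first by rewrite cats0 in neq.
by rewrite /= addnS ltnS leq_addr.
Qed.

Theorem proposition6p4 :
  exists c : seq nat -> nat,
    forall S : set (seq nat), strong_subtree S -> infinite_height S ->
      forall k : nat, exists s, S s /\ c s = k.
Proof.
exists colour => S sS ih k.
case: sS => [S0|[[r [Sr rootr]] bal sub unif succ]].
  by case: (ih 0) => s [Ss _]; rewrite S0 in Ss.
have nomax : forall s, ~ maximalS S s.
  case: bal => [[_ H]//|[n [_ [Hle _]]]] s.
  by case: (ih n.+1) => x [Sx lx]; have := Hle x Sx; lia.
have path : forall n m, exists v, [/\ S v, levelS S v = levelS S r + m.+1,
    le_T (rcons r n) v & size r + m.+1 <= size v].
  move=> n; elim=> [|m [v [Sv lv pv sv]]].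
    case: (succ r Sr (nomax r) n) => u [[[Su [ltu nob]] pu] _].
    exists u; split => //; first by rewrite (level_succ Sr ltu nob) addn1.
    by have := size_prefix pu; rewrite size_rcons addn1.
  case: (succ v Sv (nomax v) 0) => w [[[Sw [ltw nob]] pw] _].
  exists w; split => //.
    by rewrite (level_succ Sv ltw nob) lv !addnS.
    exact: prefix_trans pv ltw.1.
  by have := lt_size ltw; lia.
set B := \max_(x <- r) (dec x).1.
case: (path 0 B) => u [Su lu _ su].
case: (path (pickle (size u, k)) B) => v [Sv lv pv _].
have szv : size v = size u by apply: (unif v u Sv Su); rewrite lv lu.
exists v; split => //.
case/prefixP: pv => w ev.
rewrite ev cat_rcons in szv *; rewrite /colour szv find_cat.
have -> : has (fun x => (dec x).1 == size u) r = false.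
  apply/negbTE/hasPn => x xr.
  have hb := @leq_bigmax_seq _ r xpredT (fun x => (dec x).1) x xr isT.
  rewrite neq_ltn; apply/orP; left; apply: leq_ltn_trans hb _.
  by apply: leq_trans su; exact: leq_addl.
by rewrite /= dec_pickle eqxx addn0 nth_cat ltnn subnn /= dec_pickle.
Qed.
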